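(* Let $H$ be an $r$-cross-free hypergraph on $V=[n]$. Then $$\mathrm{cl}_r(H)=\mathrm{cl}_r(\emptyset)\cup\bigcup_{A\in H}\{A,\overline A\},$$ where $\emptyset$ is the hypergraph on $V$ with no hyperedges. As a consequence, $|\mathrm{cl}_r(H)|\le 2(r+1)n^r+2|H|$.
   Context: Hypergraphs on $V$ are identified with their hyperedge sets, and $|H|$ is the number of hyperedges; $\overline A=V\setminus A$. $\mathcal K_r(n)$ is the class of hypergraphs $\mathcal E$ on $V$ satisfying: (R0) every $X\subseteq V$ with $|X|\le r$ is in $\mathcal E$; (R1) $A\in\mathcal E\Rightarrow V\setminus A\in\mathcal E$; (R2) $A,B\in\mathcal E$ and $|A\cap B|\ge r\Rightarrow A\cup B\in\mathcal E$. $\mathcal K^0_r(n)$ is the class satisfying (R0) and (R1) only. $\mathrm{cl}_r(H)$ (resp. $\mathrm{cl}^0_r(H)$) is the intersection of all hypergraphs in $\mathcal K_r(n)$ (resp. $\mathcal K^0_r(n)$) containing $H$. $A,B\subseteq V$ are $r$-orthogonal if $\mathrm{cl}_r(\{A,B\})=\mathrm{cl}^0_r(\{A,B\})$. $H$ is $r$-cross-free if every pair of its hyperedges is $r$-orthogonal. *)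

(* Defs.v *)
From mathcomp Require Import all_boot.
Set Implicit Arguments. Unset Strict Implicit. Unset Printing Implicit Defensive.

(* Vertex set V = [n] is modelled as 'I_n; a hypergraph on V is its set of
   hyperedges, a {set {set 'I_n}}. Complement of A is ~: A. *)

Definition R0 (n r : nat) (E : {set {set 'I_n}}) : bool :=
  [forall X : {set 'I_n}, (#|X| <= r) ==> (X \in E)].
Definition R1 (n : nat) (E : {set {set 'I_n}}) : bool :=
  [forall A in E, (~: A) \in E].
Definition R2 (n r : nat) (E : {set {set 'I_n}}) : bool :=
  [forall A in E, forall B in E, (r <= #|A :&: B|) ==> ((A :|: B) \in E)].

Definition inK (n r : nat) (E : {set {set 'I_n}}) : bool :=
  [&& R0 r E, R1 E & R2 r E].
Definition inK0 (n r : nat) (E : {set {set 'I_n}}) : bool :=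
  R0 r E && R1 E.

Definition cl (n r : nat) (H : {set {set 'I_n}}) : {set {set 'I_n}} :=
  [set X | [forall E : {set {set 'I_n}}, (inK r E && (H \subset E)) ==> (X \in E)]].
Definition cl0 (n r : nat) (H : {set {set 'I_n}}) : {set {set 'I_n}} :=
  [set X | [forall E : {set {set 'I_n}}, (inK0 r E && (H \subset E)) ==> (X \in E)]].

Definition orthogonal (n r : nat) (A B : {set 'I_n}) : bool :=
  cl r [set A; B] == cl0 r [set A; B].
Definition cross_free (n r : nat) (H : {set {set 'I_n}}) : bool :=
  [forall A in H, forall B in H, orthogonal r A B].

(* Main.v *)
Require Import Defs.
From mathcomp Require Import all_boot zify.

Section S.
Variables (n r : nat).
Implicit Types (E H : {set {set 'I_n}}) (X Y A B : {set 'I_n}).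

Lemma inKP E : reflect [/\ forall X, #|X| <= r -> X \in E,
    forall X, X \in E -> ~: X \in E &
    forall X Y, X \in E -> Y \in E -> r <= #|X :&: Y| -> X :|: Y \in E] (inK r E).
Proof.
apply: (iffP and3P) => [[/forallP h0 /forall_inP h1 /forall_inP h2]|[h0 h1 h2]].
  split => //.
  - by move=> X hX; exact: (implyP (h0 X)).
  - by move=> X Y hX hY; have /forall_inP/(_ Y hY)/implyP := h2 X hX.
split.
- by apply/forallP => X; apply/implyP; exact: h0.
- by apply/forall_inP.
- by apply/forall_inP => X hX; apply/forall_inP => Y hY; apply/implyP; exact: h2.
Qed.

Lemma inK0P E : reflect ((forall X, #|X| <= r -> X \in E) /\
    (forall X, X \in E -> ~: X \in E)) (inK0 r E).
Proof.
apply: (iffP andP) => [[/forallP h0 /forall_inP h1]|[h0 h1]].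
  split => //; by move=> X hX; exact: (implyP (h0 X)).
split; last by apply/forall_inP.
by apply/forallP => X; apply/implyP; exact: h0.
Qed.

Lemma cl_min H E : inK r E -> H \subset E -> cl r H \subset E.
Proof.
move=> hE hH; apply/subsetP => X; rewrite inE => /forallP/(_ E)/implyP; apply.
by rewrite hE hH.
Qed.

Lemma cl0_min H E : inK0 r E -> H \subset E -> cl0 r H \subset E.
Proof.
move=> hE hH; apply/subsetP => X; rewrite inE => /forallP/(_ E)/implyP; apply.
by rewrite hE hH.
Qed.

Lemma cl_sub H : H \subset cl r H.
Proof.
apply/subsetP => X hX; rewrite inE; apply/forallP => E; apply/implyP.
by case/andP => _ /subsetP; apply.
Qed.

Lemma cl_inK H : inK r (cl r H).
Proof.
apply/inKP; split.
- move=> X hX; rewrite inE; apply/forallP => E; apply/implyP.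
  by case/andP => /inKP [h0 _ _] _; exact: h0.
- move=> X; rewrite !inE => /forallP h; apply/forallP => E; apply/implyP => hE.
  have := implyP (h E) hE; case/andP: hE => /inKP [_ h1 _] _; exact: h1.
- move=> X Y; rewrite !inE => /forallP hx /forallP hy hXY.
  apply/forallP => E; apply/implyP => hE.
  have := implyP (hx E) hE; have := implyP (hy E) hE.
  case/andP: hE => /inKP [_ _ h2] _ a b; exact: h2.
Qed.

Definition S0 : {set {set 'I_n}} := [set X : {set 'I_n} | (#|X| <= r) || (#|~: X| <= r)].

Lemma S0_sub E : inK0 r E -> S0 \subset E.
Proof.
move=> /inK0P [h0 h1]; apply/subsetP => X; rewrite inE => /orP [h|h].
  exact: h0.
by rewrite -(setCK X); apply: h1; apply: h0.
Qed.

Lemma inK_inK0 E : inK r E -> inK0 r E.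
Proof. by case/and3P => a b _; apply/andP. Qed.

Lemma small_sub X Y : #|X| <= r -> r <= #|X :&: Y| -> X \subset Y.
Proof.
move=> h1 h2.
have e : X :&: Y = X.
  apply/eqP; rewrite eqEcard subsetIl /=; exact: leq_trans h1 h2.
by apply/setIidPl.
Qed.

Lemma S0_union X Y : X \in S0 -> r <= #|X :&: Y| -> X :|: Y = Y \/ X :|: Y \in S0.
Proof.
rewrite inE => /orP [h|h] hr.
  by left; apply/setUidPr; exact: small_sub hr.
right; rewrite inE; apply/orP; right; apply: leq_trans h.
by apply: subset_leq_card; rewrite setCU subsetIl.
Qed.

Lemma S0C X : X \in S0 -> ~: X \in S0.
Proof. by rewrite !inE setCK orbC. Qed.

Lemma unionT E X Y : S0 \subset E -> X \in E -> Y \in E -> (X \in S0) || (Y \in S0) ->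
  r <= #|X :&: Y| -> X :|: Y \in E.
Proof.
move=> /subsetP sE hX hY /orP [h|h] hr.
  by first [case: (S0_union _ _ h hr)|case: (S0_union _ _ h hr)] => [->|/sE].
rewrite setIC in hr; rewrite setUC.
by first [case: (S0_union _ _ h hr)|case: (S0_union _ _ h hr)] => [->|/sE].
Qed.

Lemma S0_inK : inK r S0.
Proof.
apply/inKP; split.
- by move=> X h; rewrite inE h.
- exact: S0C.
- by move=> X Y hX hY; apply: unionT => //; rewrite hX.
Qed.

Lemma cl0_eq : cl r set0 = S0.
Proof.
apply/eqP; rewrite eqEsubset cl_min ?S0_inK ?sub0set //=.
exact/S0_sub/inK_inK0/cl_inK.
Qed.

Definition U H := \bigcup_(A in H) [set A; ~: A].
Definition T H := S0 :|: U H.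

Lemma UP H X : reflect (exists2 A, A \in H & (X == A) || (X == ~: A)) (X \in U H).
Proof.
apply: (iffP bigcupP) => [[A hA]|[A hA h]]; rewrite ?inE; first by exists A.
by exists A; rewrite ?inE.
Qed.

Lemma T_inK0 H : inK0 r (T H).
Proof.
apply/inK0P; split.
- by move=> X h; rewrite inE inE h.
- move=> X; rewrite inE => /orP [h|/UP [A hA h]].
    by rewrite inE S0C.
  rewrite inE; apply/orP; right; apply/UP; exists A => //.
  by case/orP: h => /eqP ->; rewrite ?setCK eqxx ?orbT.
Qed.

Lemma clAB A B X : (X == A) || (X == ~: A) -> X \in cl r [set A; B].
Proof.
have hA : A \in cl r [set A; B] by apply: (subsetP (cl_sub _)); rewrite !inE eqxx.
case/orP => /eqP ->//.
by case/inKP: (cl_inK [set A; B]) => _ h1 _; apply: h1.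
Qed.

Lemma T_inK H : cross_free r H -> inK r (T H).
Proof.
move=> /forall_inP cf.
case/inK0P: (T_inK0 H) => h0 h1.
apply/inKP; split; [exact: h0 | exact: h1 | move=> X Y hX hY hr].
have sS : S0 \subset T H by apply: subsetUl.
case/setUP: (hX) => [hXS|hXU]; first by apply: (unionT _ _ _ sS hX hY _ hr); rewrite hXS.
case/setUP: (hY) => [hYS|]; first by apply: (unionT _ _ _ sS hX hY _ hr); rewrite hYS orbT.
move=> /UP [B hB eY]; case/UP: hXU => A hA eX.
have /forall_inP /(_ B hB) /eqP hAB := cf A hA.
have : X :|: Y \in cl r [set A; B].
  case/inKP: (cl_inK [set A; B]) => _ _ h2; apply: h2 => //.
    exact: clAB.
  rewrite setUC; exact: clAB.
rewrite hAB; apply/subsetP/cl0_min; first exact: T_inK0.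
apply/subsetP => Z; rewrite !inE => /orP [] /eqP -> ; apply/orP; right; apply/UP.
  by exists A => //; rewrite eqxx.
by exists B => //; rewrite eqxx.
Qed.

Lemma cl_eqT H : cross_free r H -> cl r H = T H.
Proof.
move=> cf; apply/eqP; rewrite eqEsubset cl_min ?T_inK //=; last first.
  by apply/subsetP => A hA; rewrite inE; apply/orP; right; apply/UP; exists A; rewrite ?eqxx.
rewrite subUset S0_sub ?inK_inK0 ?cl_inK //=.
apply/subsetP => X /UP [A hA h].
have hAc : A \in cl r H by apply: (subsetP (cl_sub H)).
case/orP: h => /eqP -> //.
by case/inKP: (cl_inK H) => _ h1 _; apply: h1.
Qed.

Lemma card_U H : #|U H| <= 2 * #|H|.
Proof.
have s : U H \subset H :|: [set ~: A | A in H].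
  apply/subsetP => X /UP [A hA /orP [] /eqP ->]; rewrite inE ?hA //.
  by rewrite imset_f ?orbT.
apply: leq_trans (subset_leq_card s) _.
apply: leq_trans (leq_card_setU _ _) _.
by rewrite mul2n -addnn leq_add2l leq_imset_card.
Qed.

Definition P0 k : {set {set 'I_n}} := [set X : {set 'I_n} | #|X| <= k].

Lemma card_S0 : #|S0| <= 2 * #|P0 r|.
Proof.
have s : S0 \subset P0 r :|: [set ~: A | A in P0 r].
  apply/subsetP => X; rewrite inE => /orP [h|h]; rewrite inE.
    by rewrite inE h.
  by apply/orP; right; rewrite -(setCK X) imset_f // inE.
apply: leq_trans (subset_leq_card s) _.
apply: leq_trans (leq_card_setU _ _) _.
by rewrite mul2n -addnn leq_add2l leq_imset_card.
Qed.

Lemma bin_le k : 'C(n, k) <= n ^ k.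
Proof.
apply: (leq_trans (leq_pmulr _ (fact_gt0 k))).
rewrite bin_ffact ffact_prod.
apply: (@leq_trans (\prod_(i < k) n)).
  by apply: leq_prod => i _; apply: leq_subr.
by rewrite prod_nat_const card_ord.
Qed.

Lemma card_P0 k : 0 < n -> #|P0 k| <= k.+1 * n ^ k.
Proof.
move=> n0; elim: k => [|k IH].
  have s : P0 0 \subset [set X : {set 'I_n} | #|X| == 0].
    by apply/subsetP => X; rewrite !inE leqn0.
  apply: leq_trans (subset_leq_card s) _.
  by rewrite card_draws card_ord bin0.
have s : P0 k.+1 \subset P0 k :|: [set X : {set 'I_n} | #|X| == k.+1].
  apply/subsetP => X; rewrite !inE leq_eqVlt ltnS orbC.
  by case/orP => ->; rewrite ?orbT.
apply: leq_trans (subset_leq_card s) _.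
apply: leq_trans (leq_card_setU _ _) _.
rewrite card_draws card_ord.
have h1 := bin_le k.+1.
have h2 : n ^ k <= n ^ k.+1 by apply: leq_pexp2l.
rewrite mulSn addnC; apply: leq_add => //.
apply: leq_trans IH _; exact: leq_mul.
Qed.

End S.

Theorem mainTheorem16 (n r : nat) (H : {set {set 'I_n}}) :
  cross_free r H ->
  cl r H = cl r set0 :|: \bigcup_(A in H) [set A; ~: A] /\
  (0 < n -> #|cl r H| <= 2 * (r + 1) * n ^ r + 2 * #|H|).
Proof.
move=> cf; rewrite cl_eqT // cl0_eq; split => // n0.
apply: leq_trans (leq_card_setU _ _) _.
apply: leq_add; last exact: card_U.
apply: leq_trans (card_S0 _ _) _.
rewrite addn1 -mulnA leq_mul2l /=; exact: card_P0.
Qed.
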